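(* Let $G_1$ and $G_2$ be connected $k$-regular graphs with $|V(G_1)|=|V(G_2)|=n$ and $Z(G_1)\neq Z(G_2)$. Let $m\geq n$, and let $G'=(G_1\vee P_m)\cup G_2$ and $G''=(G_2\vee P_m)\cup G_1$, where $\cup$ denotes disjoint union. Then $G'$ and $G''$ are nonisomorphic graphs that are cospectral with respect to the adjacency matrix, and $Z(G')\neq Z(G'')$.
   Context: Graphs are finite, simple, undirected. $P_m$ is the path on $m$ vertices. The join $G\vee H$ is the disjoint union of $G$ and $H$ together with all edges $\{u,v\}$, $u\in V(G)$, $v\in V(H)$. The zero forcing number $Z(G)$ is the minimum size of a set $S\subseteq V(G)$ such that, if the vertices of $S$ are colored blue and all others white, repeated application of the rule ''a blue vertex with exactly one white neighbor forces that neighbor to become blue'' eventually makes every vertex blue. *)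

(* Defs.v *)
From mathcomp Require Import all_boot all_order all_algebra.
From Stdlib Require Import ClassicalDescription.
Set Implicit Arguments. Unset Strict Implicit. Unset Printing Implicit Defensive.

Definition simple_graph (T : finType) (e : rel T) : Prop :=
  symmetric e /\ irreflexive e.

Definition connected_graph (T : finType) (e : rel T) : Prop :=
  forall x y : T, connect e x y.

Definition k_regular (T : finType) (e : rel T) (k : nat) : Prop :=
  forall x : T, #|[set y | e x y]| = k.

Definition path_rel (m : nat) : rel 'I_m :=
  fun i j => (i.+1 == j :> nat) || (j.+1 == i :> nat).

Definition join_rel (T U : finType) (e : rel T) (f : rel U) : rel (T + U)%type :=
  fun x y => match x, y with
             | inl a, inl b => e a b
             | inr a, inr b => f a b
             | _, _ => true
             end.

Definition dunion_rel (T U : finType) (e : rel T) (f : rel U) : rel (T + U)%type :=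
  fun x y => match x, y with
             | inl a, inl b => e a b
             | inr a, inr b => f a b
             | _, _ => false
             end.

Definition isomorphic (T U : finType) (e : rel T) (f : rel U) : Prop :=
  exists g : T -> U, bijective g /\ forall x y, f (g x) (g y) = e x y.

Definition adjacency (T : finType) (e : rel T) : 'M[int]_#|T| :=
  \matrix_(i, j) (e (enum_val i) (enum_val j))%:R%R.

Definition cospectral (T U : finType) (e : rel T) (f : rel U) : Prop :=
  char_poly (adjacency e) = char_poly (adjacency f).

(* Zero forcing.  A blue vertex u with exactly one white neighbour v forces v. *)
Definition valid_force (T : finType) (e : rel T) (B : {set T}) (u v : T) : bool :=
  [&& u \in B, e u v, v \notin B & [forall w, e u w ==> (w == v) || (w \in B)]].

Fixpoint forcing_chain (T : finType) (e : rel T) (B : {set T}) (s : seq T) : bool :=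
  match s with
  | [::] => B == setT
  | v :: s' => [exists u, valid_force e B u v] && forcing_chain e (v |: B) s'
  end.

Definition zero_forcing_set (T : finType) (e : rel T) (S : {set T}) : Prop :=
  exists s : seq T, forcing_chain e S s.

Definition zero_forcing_setb (T : finType) (e : rel T) (S : {set T}) : bool :=
  if excluded_middle_informative (zero_forcing_set e S) then true else false.

(* Z(G): minimum size of a zero forcing set (setT is one, so #|T| is a valid default) *)
Definition zero_forcing_number (T : finType) (e : rel T) : nat :=
  \big[minn/#|T|]_(S : {set T} | zero_forcing_setb e S) #|S|.

(* Main.v *)
Require Import Defs.
From mathcomp Require Import all_boot all_order all_algebra ring.
From Stdlib Require Import ClassicalDescription.
Set Implicit Arguments. Unset Strict Implicit. Unset Printing Implicit Defensive.


Section ZF.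
Variables (T : finType) (e : rel T).

Lemma zfsbP S : zero_forcing_setb e S = true <-> zero_forcing_set e S.
Proof. by rewrite /zero_forcing_setb; case: excluded_middle_informative. Qed.

Lemma Z_le S : zero_forcing_set e S -> zero_forcing_number e <= #|S|.
Proof.
move=> H; rewrite /zero_forcing_number.
have : S \in index_enum {set T} by rewrite mem_index_enum.
elim: (index_enum _) => // x r IH; rewrite inE big_cons.
case/orP => [/eqP <-|/IH Hr].
  have -> : zero_forcing_setb e S = true by apply/zfsbP.
  by rewrite geq_minl.
by case: ifP => // _; rewrite geq_min Hr orbT.
Qed.

Lemma Z_ex : exists2 S, zero_forcing_set e S & zero_forcing_number e = #|S|.
Proof.
rewrite /zero_forcing_number.
apply: (big_ind (fun x => exists2 S, zero_forcing_set e S & x = #|S|)).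
- exists setT; [by exists [::] => /= | by rewrite cardsT].
- move=> x y [S1 H1 ->] [S2 H2 ->]; rewrite /minn; case: ltnP => _;
    [exists S1|exists S2] => //.
- by move=> S /zfsbP H; exists S.
Qed.

Lemma Z_ge L : (forall S, zero_forcing_set e S -> L <= #|S|) ->
  L <= zero_forcing_number e.
Proof. by move=> H; case: Z_ex => S HS ->; apply: H. Qed.

Fixpoint chainok (B : {set T}) (s : seq T) : bool :=
  if s is v :: s' then [exists u, valid_force e B u v] && chainok (v |: B) s'
  else true.

Lemma forcing_chainE B s :
  forcing_chain e B s = chainok B s && (B :|: [set x in s] == setT).
Proof.
elim: s B => [|v s IH] B /=.
  by congr (_ == _); apply/setP=> x; rewrite !inE orbF.
rewrite IH andbA; congr (_ && (_ == _)); apply/setP=> x; rewrite !inE.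
by case: (x == v); case: (x \in B).
Qed.

Lemma chainok_cat B s1 s2 :
  chainok B (s1 ++ s2) = chainok B s1 && chainok (B :|: [set x in s1]) s2.
Proof.
elim: s1 B => [|v s1 IH] B /=.
  by congr chainok; apply/setP => x; rewrite !inE orbF.
rewrite IH andbA; congr (_ && chainok _ _); apply/setP => x; rewrite !inE.
by case: (x == v); case: (x \in B).
Qed.

Lemma zfs_step B v u : zero_forcing_set e (v |: B) -> valid_force e B u v ->
  zero_forcing_set e B.
Proof. by move=> [s Hs] Hv; exists (v :: s) => /=; rewrite Hs andbT; apply/existsP; exists u. Qed.

Lemma zfs_first S : zero_forcing_set e S -> S = setT \/ exists u v, valid_force e S u v.
Proof.
case=> [[|v s]] /=; first by move/eqP; left.
by case/andP=> /existsP [u Hu] _; right; exists u, v.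
Qed.

Lemma Z_leT : zero_forcing_number e <= #|T|.
Proof. by rewrite -cardsT; apply: Z_le; exists [::] => /=. Qed.

Lemma Z_gt0 : 0 < #|T| -> 0 < zero_forcing_number e.
Proof.
move=> HT; apply: Z_ge => S /zfs_first [->|[u [v /and4P [Hu _ _ _]]]].
  by rewrite cardsT.
by apply/card_gt0P; exists u.
Qed.

End ZF.

Section Iso.
Variables (T U : finType) (e : rel T) (f : rel U) (g : T -> U).
Hypothesis (gbij : bijective g) (gf : forall x y, f (g x) (g y) = e x y).

Lemma inj_g : injective g. Proof. exact: bij_inj. Qed.

Lemma fc_iso B s : forcing_chain e B s -> forcing_chain f (g @: B) (map g s).
Proof.
case: gbij => h gh hg.
elim: s B => [|v s IH] B /=.
  move/eqP => ->; apply/eqP/setP => y; rewrite inE -(hg y); exact: imset_f.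
case/andP => /existsP [u /and4P [Hu Huv Hv Hw]] Hs; apply/andP; split.
  apply/existsP; exists (g u); apply/and4P; split.
  - exact: imset_f.
  - by rewrite gf.
  - by rewrite (mem_imset _ _ inj_g).
  - apply/forallP => w; rewrite -(hg w) gf (mem_imset _ _ inj_g) (inj_eq inj_g).
    exact: (forallP Hw).
by rewrite -imsetU1; apply: IH.
Qed.

Lemma Z_iso_le : zero_forcing_number f <= zero_forcing_number e.
Proof.
case: (Z_ex e) => S [s Hs] ->.
rewrite -(card_imset S inj_g); apply: Z_le; exists (map g s); exact: fc_iso.
Qed.
End Iso.

Lemma Z_iso (T U : finType) (e : rel T) (f : rel U) :
  isomorphic e f -> zero_forcing_number e = zero_forcing_number f.
Proof.
case=> g [gb gf]; apply/eqP; rewrite eqn_leq; apply/andP; split; last exact: Z_iso_le gf.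
case: (gb) => h gh hg.
have hb : bijective h by exists g.
apply: (Z_iso_le hb) => x y; by rewrite -gf !hg.
Qed.

Lemma card_sumset (T U : finType) (A : {set T + U}) :
  #|A| = #|[set a | inl a \in A]| + #|[set b | inr b \in A]|.
Proof.
rewrite -!sum1_card big_mkcond big_sumType /=.
by congr (_ + _); rewrite [RHS]big_mkcond; apply: eq_bigr => i _; rewrite inE.
Qed.

Section DU.
Variables (T U : finType) (e : rel T) (f : rel U).
Let D := dunion_rel e f.

Definition lft (x : T + U) : option T := if x is inl a then Some a else None.
Definition rgt (x : T + U) : option U := if x is inr a then Some a else None.

Lemma chain_inl B s (C : {set T + U}) : chainok e B s -> (forall x, (inl x \in C) = (x \in B)) ->
  chainok D C (map inl s).
Proof.
elim: s B C => [|v s IH] B C //= /andP [/existsP [u /and4P [Hu Huv Hv Hw]] Hs] HC.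
apply/andP; split; last first.
  by apply: (IH (v |: B)) => // x; rewrite !inE HC.
apply/existsP; exists (inl u); apply/and4P; split => //; rewrite ?HC //.
apply/forallP => -[w|w] //=; rewrite HC; exact: (forallP Hw).
Qed.

Lemma chain_inr B s (C : {set T + U}) : chainok f B s -> (forall x, (inr x \in C) = (x \in B)) ->
  chainok D C (map inr s).
Proof.
elim: s B C => [|v s IH] B C //= /andP [/existsP [u /and4P [Hu Huv Hv Hw]] Hs] HC.
apply/andP; split; last first.
  by apply: (IH (v |: B)) => // x; rewrite !inE HC.
apply/existsP; exists (inr u); apply/and4P; split => //; rewrite ?HC //.
apply/forallP => -[w|w] //=; rewrite HC; exact: (forallP Hw).
Qed.

Lemma chain_lft B s : chainok D B s -> chainok e [set a | inl a \in B] (pmap lft s).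
Proof.
elim: s B => [|v s IH] B //= /andP [/existsP [u /and4P [Hu Huv Hv Hw]] Hs].
case: v Huv Hv Hw Hs => [a|b] Huv Hv Hw Hs /=.
  case: u Hu Huv Hw => [c|c] //= Hu Huv Hw.
  apply/andP; split.
    apply/existsP; exists c; apply/and4P; split; rewrite ?inE //.
    apply/forallP => w; move: (forallP Hw (inl w)) => /=; by rewrite inE.
  have -> : a |: [set a0 | inl a0 \in B] = [set a0 | inl a0 \in inl a |: B].
    by apply/setP => x; rewrite !inE.
  exact: IH.
have -> : [set a0 | inl a0 \in B] = [set a0 | inl a0 \in inr b |: B].
  by apply/setP => x; rewrite !inE.
exact: IH.
Qed.

Lemma chain_rgt B s : chainok D B s -> chainok f [set a | inr a \in B] (pmap rgt s).
Proof.
elim: s B => [|v s IH] B //= /andP [/existsP [u /and4P [Hu Huv Hv Hw]] Hs].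
case: v Huv Hv Hw Hs => [a|b] Huv Hv Hw Hs /=; last first.
  case: u Hu Huv Hw => [c|c] //= Hu Huv Hw.
  apply/andP; split.
    apply/existsP; exists c; apply/and4P; split; rewrite ?inE //.
    apply/forallP => w; move: (forallP Hw (inr w)) => /=; by rewrite inE.
  have -> : b |: [set a0 | inr a0 \in B] = [set a0 | inr a0 \in inr b |: B].
    by apply/setP => x; rewrite !inE.
  exact: IH.
have -> : [set a0 | inr a0 \in B] = [set a0 | inr a0 \in inl a |: B].
  by apply/setP => x; rewrite !inE.
exact: IH.
Qed.

Lemma Z_dunion : zero_forcing_number D = zero_forcing_number e + zero_forcing_number f.
Proof.
apply/eqP; rewrite eqn_leq; apply/andP; split.
  case: (Z_ex e) => S1 [s1 Hs1] ->; case: (Z_ex f) => S2 [s2 Hs2] ->.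
  pose S := [set x | match x with inl a => a \in S1 | inr b => b \in S2 end].
  have -> : #|S1| + #|S2| = #|S|.
    rewrite card_sumset; congr (_ + _); apply: eq_card => x; by rewrite !inE.
  apply: Z_le; exists (map inl s1 ++ map inr s2).
  move: Hs1 Hs2; rewrite !forcing_chainE => /andP [c1 /eqP f1] /andP [c2 /eqP f2].
  rewrite chainok_cat; apply/andP; split; first (apply/andP; split).
  - by apply: (chain_inl c1) => x; rewrite inE.
  - apply: (chain_inr c2) => x; rewrite !inE; case: (x \in S2) => //=.
    by apply/negP => /mapP [].
  - apply/eqP/setP => -[a|b]; rewrite !inE mem_cat.
      move/setP: f1 => /(_ a); rewrite !inE => <-; rewrite (mem_map inl_inj).
      have -> : (inl a \in map (@inr T U) s2) = false by apply/negP => /mapP [].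
      by rewrite orbF.
    move/setP: f2 => /(_ b); rewrite !inE => <-; rewrite (mem_map (@inr_inj _ _)).
    have -> : (inr b \in map (@inl T U) s1) = false by apply/negP => /mapP [].
    done.
apply: Z_ge => S [s]; rewrite forcing_chainE => /andP [c /eqP fin].
rewrite card_sumset leq_add //; apply: Z_le.
  exists (pmap lft s); rewrite forcing_chainE; apply/andP; split; first exact: chain_lft.
  apply/eqP/setP => a; rewrite !inE mem_pmap.
  move/setP: fin => /(_ (inl a)); rewrite !inE => /orP [->//|H].
  by rewrite (map_f lft H) orbT.
exists (pmap rgt s); rewrite forcing_chainE; apply/andP; split; first exact: chain_rgt.
apply/eqP/setP => a; rewrite !inE mem_pmap.
move/setP: fin => /(_ (inr a)); rewrite !inE => /orP [->//|H].
by rewrite (map_f rgt H) orbT.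
Qed.
End DU.

Section Join.
Variables (T : finType) (e : rel T) (n k m : nat).
Hypotheses (se : simple_graph e) (re : k_regular e k) (cT : #|T| = n)
  (k1 : 0 < k) (nm : n <= m) (m2 : 1 < m).
Let J := join_rel e (@path_rel m).

Let B (i : nat) := [set x : T + 'I_m | if x is inr p then p <= i else true].

Lemma zfsB j : forall i, i + j = m.-1 -> zero_forcing_set J (B i).
Proof.
elim: j => [|j IH] i.
  rewrite addn0 => Hi; exists [::] => /=; apply/eqP/setP => -[a|p]; rewrite !inE //.
  by rewrite Hi -ltnS prednK ?ltn_ord // (leq_trans _ m2).
move=> Hij.
have im : i.+1 < m by rewrite -(prednK (leq_trans _ m2)) // ltnS -Hij addnS ltnS leq_addr.
have im' : i < m by apply: ltnW.
apply: (@zfs_step _ _ _ (inr (Ordinal im)) (inr (Ordinal im'))).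
  have -> : inr (Ordinal im) |: B i = B i.+1.
    apply/setP => -[a|p]; rewrite !inE //= [RHS]leq_eqVlt ltnS; congr (_ || _).
  apply: (IH i.+1); by rewrite addSnnS.
apply/and4P; split; rewrite ?inE //=.
- by rewrite /path_rel /= eqxx.
- by rewrite ltnn.
apply/forallP => -[a|q] /=; rewrite ?inE ?orbT //.
apply/implyP => /orP [/eqP H|/eqP H]; last by rewrite /= orbC; apply/orP; left; move: H => /= <-; apply: leqnSn.
by apply/orP; left; apply/eqP; congr inr; apply: val_inj; rewrite /= H.
Qed.

Lemma Z_join_le : zero_forcing_number J <= n.+1.
Proof.
have m0 : 0 < m by apply: ltnW.
have -> : n.+1 = #|B 0|.
  rewrite card_sumset -cT -addn1; congr (_ + _).
    by apply: eq_card => a; rewrite !inE.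
  rewrite -(cards1 (Ordinal m0)); apply: eq_card => p; rewrite !inE leqn0.
  by rewrite -val_eqE.
apply: Z_le; apply: (zfsB (j := m.-1)); done.
Qed.

Lemma Z_join_ge : n.+1 <= zero_forcing_number J.
Proof.
apply: Z_ge => S /zfs_first [->|[u [v /and4P [Hu Huv Hv Hw]]]].
  by rewrite cardsT card_sum cT card_ord -addn1 leq_add2l (ltnW m2).
have irr : forall x, ~~ J x x.
  case=> [a|p] /=; first by rewrite (proj2 se).
  by rewrite /path_rel /= !gtn_eqF.
pose N := [set w | J u w].
have uN : u \notin N by rewrite inE irr.
have vN : v \in N by rewrite inE.
have sub : u |: (N :\ v) \subset S.
  apply/subsetP => w; rewrite !inE => /orP [/eqP -> //|/andP [wv Hw']].
  by move: (forallP Hw w); rewrite Hw' /= (negbTE wv).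
have cN : #|u |: (N :\ v)| = #|N|.
  by rewrite cardsU1 in_setD1 (negbTE uN) andbF (cardsD1 v N) vN.
apply: leq_trans (subset_leq_card sub); rewrite cN card_sumset /N.
clear uN vN sub cN N; case: u {Hu Huv Hw} => [a|p].
  have -> : #|[set b | inr b \in [set w | J (inl a) w]]| = m.
    by rewrite -[RHS]card_ord; apply: eq_card => b; rewrite !inE.
  have -> : #|[set b | inl b \in [set w | J (inl a) w]]| = k.
    by rewrite -(re a); apply: eq_card => b; rewrite !inE.
  by rewrite addnC -addn1 leq_add.
have -> : #|[set b | inl b \in [set w | J (inr p) w]]| = n.
  by rewrite -cT; apply: eq_card => b; rewrite !inE.
rewrite -addn1 leq_add2l; apply/card_gt0P.
case: (ltnP p.+1 m) => Hp.
  exists (Ordinal Hp); by rewrite !inE /= /path_rel /= eqxx.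
have p0 : 0 < val p by rewrite -ltnS (leq_trans m2 Hp).
have Hq : p.-1 < m by rewrite (leq_ltn_trans (leq_pred _)).
exists (Ordinal Hq); by rewrite !inE /= /path_rel /= prednK // eqxx orbT.
Qed.

Lemma Z_join : zero_forcing_number J = n.+1.
Proof. by apply/eqP; rewrite eqn_leq Z_join_le Z_join_ge. Qed.
End Join.
Module MX.
Import GRing.Theory Num.Theory.
Local Open Scope ring_scope.

Lemma sum_delta (I : finType) (a : I) (G : I -> int) :
  \sum_l ((a == l)%:R * G l) = G a.
Proof.
rewrite (bigD1 a) //= eqxx mul1r big1 ?addr0 // => l /negbTE.
by rewrite eq_sym => ->; rewrite mul0r.
Qed.

Lemma char_poly_sim N (A B Q : 'M[int]_N) :
  Q *m A = B *m Q -> \det Q != 0 -> char_poly A = char_poly B.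
Proof.
move=> HQ dQ.
have H : map_mx polyC Q *m char_poly_mx A = char_poly_mx B *m map_mx polyC Q.
  rewrite /char_poly_mx mulmxBr mulmxBl -!map_mxM HQ; congr (_ - _).
  by rewrite scalar_mxC.
have := congr1 determinant H; rewrite !det_mulmx det_map_mx /= [RHS]mulrC.
by move/mulfI; apply; rewrite polyC_eq0.
Qed.

Lemma char_poly_bij N (U : finType) (F : U -> U -> int) (h1 h2 : 'I_N -> U) :
  bijective h1 -> bijective h2 ->
  char_poly (\matrix_(i, j) F (h1 i) (h1 j)) = char_poly (\matrix_(i, j) F (h2 i) (h2 j)).
Proof.
case=> g1 c1 c1'; case=> g2 c2 c2'.
have E1 x l : (x == h1 l) = (g1 x == l).
  by apply/eqP/eqP => [->|<-]; rewrite ?c1 ?c1'.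
have E2 x l : (x == h2 l) = (g2 x == l).
  by apply/eqP/eqP => [->|<-]; rewrite ?c2 ?c2'.
pose Q : 'M[int]_N := \matrix_(i, l) (h2 i == h1 l)%:R.
pose Q' : 'M[int]_N := \matrix_(l, j) (h1 l == h2 j)%:R.
apply: (@char_poly_sim _ _ _ Q).
  apply/matrixP => i j; rewrite !mxE.
  under eq_bigr do rewrite !mxE E1.
  rewrite /Q; under [RHS]eq_bigr do rewrite !mxE eq_sym E2 mulrC.
  by rewrite !sum_delta c1' c2'.
have : Q *m Q' = 1%:M.
  apply/matrixP => i j; rewrite !mxE.
  rewrite /Q /Q'; under eq_bigr do rewrite !mxE E1.
  rewrite sum_delta c1' (inj_eq (can_inj c2)).
  by case: (i == j).
move/(congr1 determinant); rewrite det_mulmx det1 => H.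
by apply/eqP => H0; move: H; rewrite H0 mul0r => /eqP; rewrite eq_sym oner_eq0.
Qed.

Lemma cosp_iso (T U : finType) (e : rel T) (f : rel U) (g : T -> U) :
  bijective g -> (forall x y, f (g x) (g y) = e x y) -> cospectral e f.
Proof.
move=> gb gf; rewrite /cospectral.
have E : #|T| = #|U| := bij_eq_card gb.
have -> : char_poly (adjacency e) = char_poly (castmx (E, E) (adjacency e)).
  by case: _ / E.
have -> : castmx (E, E) (adjacency e) =
   \matrix_(i, j) ((f (g (enum_val (cast_ord (esym E) i))) (g (enum_val (cast_ord (esym E) j))))%:R : int).
  by apply/matrixP => i j; rewrite castmxE !mxE gf.
rewrite /adjacency.
apply: (char_poly_bij (fun x y => (f x y)%:R)).
  case: gb => g' c c'; exists (fun u => cast_ord E (enum_rank (g' u))) => i.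
    by rewrite /= c enum_valK; apply: val_inj.
  by rewrite /= cast_ordK enum_rankK c'.
by exists enum_rank => x; rewrite ?enum_valK ?enum_rankK.
Qed.

Definition mat (T : finType) (F : T -> T -> int) : 'M[int]_#|T| :=
  \matrix_(i, j) F (enum_val i) (enum_val j).

Lemma mat_mul (T : finType) (F G : T -> T -> int) :
  mat F *m mat G = mat (fun a b => \sum_x F a x * G x b).
Proof.
apply/matrixP => i j; rewrite !mxE.
under eq_bigr do rewrite !mxE.
symmetry; rewrite (reindex (fun i : 'I_#|T| => enum_val i)) //=.
by exists enum_rank => x _; rewrite ?enum_valK ?enum_rankK.
Qed.

Lemma deg_sum (T : finType) (e : rel T) x :
  \sum_a (((e x a : nat))%:R : int) = (#|[set a | e x a]|)%:R.
Proof.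
rewrite -natr_sum; congr (_%:R); rewrite -sum1_card [RHS]big_mkcond.
by apply: eq_bigr => a _; rewrite inE; case: (e x a).
Qed.

Section Cosp.
Variables (T1 T2 : finType) (e1 : rel T1) (e2 : rel T2) (n k m : nat).
Hypotheses (s1 : symmetric e1) (s2 : symmetric e2) (r1 : k_regular e1 k)
  (r2 : k_regular e2 k) (c1 : #|T1| = n) (c2 : #|T2| = n) (n0 : (0 < n)%N).

Definition UU := ((T1 + 'I_m) + T2)%type.
Definition Gp : rel UU := dunion_rel (join_rel e1 (@path_rel m)) e2.
Definition Gpp := dunion_rel (join_rel e2 (@path_rel m)) e1.
Definition sig (x : UU) : (T2 + 'I_m) + T1 :=
  match x with inl (inl a) => inr a | inl (inr p) => inl (inr p) | inr b => inl (inl b) end.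
Definition Yr : rel UU := fun x y => Gpp (sig x) (sig y).

Definition vv (x : UU) : int :=
  match x with inl (inl _) => 1 | inl (inr _) => 0 | inr _ => -1 end.
Definition ww (x : UU) : int :=
  match x with inl (inr _) => 1 | _ => 0 end.
Definition Xf (x y : UU) : int := (Gp x y)%:R.
Definition Yf (x y : UU) : int := (Yr x y)%:R.
Definition Qf (x y : UU) : int := n%:R * (x == y)%:R - vv x * vv y.

Lemma colsum1 b : \sum_a (((e1 a b : nat))%:R : int) = k%:R.
Proof. by under eq_bigr do rewrite s1; rewrite deg_sum r1. Qed.
Lemma colsum2 b : \sum_a (((e2 a b : nat))%:R : int) = k%:R.
Proof. by under eq_bigr do rewrite s2; rewrite deg_sum r2. Qed.
Lemma rowsum1 b : \sum_a (((e1 b a : nat))%:R : int) = k%:R.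
Proof. by rewrite deg_sum r1. Qed.
Lemma rowsum2 b : \sum_a (((e2 b a : nat))%:R : int) = k%:R.
Proof. by rewrite deg_sum r2. Qed.

Lemma L1 b : \sum_z vv z * Xf z b = k%:R * vv b + n%:R * ww b.
Proof.
rewrite !big_sumType /= /Xf /=.
case: b => [[b|q]|d] /=; rewrite -!mulr_sumr ?big1_eq ?mul1r ?mul0r ?mulN1r ?mulr0 ?mulr1
  ?addr0 ?add0r ?colsum1 ?colsum2 ?sumr_const ?mulrN1 //.
by rewrite -c1.
Qed.

Lemma L2 a : \sum_z Yf a z * vv z = k%:R * vv a - n%:R * ww a.
Proof.
rewrite !big_sumType /= /Yf /Yr /=.
case: a => [[b|q]|d] /=; rewrite -!mulr_suml ?big1_eq ?mulr1 ?mulr0 ?mul1r ?mul0r ?mulrN1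
  ?subr0 ?addr0 ?add0r ?rowsum1 ?rowsum2 ?sumr_const //.
by rewrite -c2.
Qed.

Lemma L3 a b : Xf a b - Yf a b = vv a * ww b + ww a * vv b.
Proof.
rewrite /Xf /Yf /Yr.
case: a => [[a|p]|c]; case: b => [[b|q]|d] /=; rewrite ?subrr //.

Qed.

Lemma L4 : \sum_z vv z * vv z = (2 * n)%:R.
Proof.
rewrite !big_sumType /= ?big1_eq.
under eq_bigr do rewrite mul1r.
under [X in _ + X]eq_bigr do rewrite mulrNN mul1r.
have sc : forall (T : finType), \sum_(i : T) (1:int) = #|T|%:R by move=> T; rewrite sumr_const.
by rewrite !sc addr0 c1 c2 mul2n -addnn natrD.
Qed.

Lemma L5 b : \sum_z vv z * Qf z b = - (n%:R * vv b).
Proof.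
rewrite /Qf; under eq_bigr do rewrite mulrBr.
rewrite sumrB.
have -> : \sum_i vv i * (n%:R * (i == b)%:R) = \sum_i (b == i)%:R * (n%:R * vv i).
  by apply: eq_bigr => i _; rewrite eq_sym; ring.
have -> : \sum_i vv i * (vv i * vv b) = vv b * \sum_i (vv i * vv i).
  by rewrite mulr_sumr; apply: eq_bigr => i _; ring.
rewrite sum_delta L4 natrM; ring.
Qed.

Lemma QX : mat Qf *m mat Xf = mat Yf *m mat Qf.
Proof.
rewrite !mat_mul; apply/matrixP => i j; rewrite !mxE.
set a := enum_val i; set b := enum_val j.
rewrite /Qf.
have -> : \sum_x (n%:R * (a == x)%:R - vv a * vv x) * Xf x b =
   \sum_x ((a == x)%:R * (n%:R * Xf x b) - vv a * (vv x * Xf x b)).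
  by apply: eq_bigr => x _; ring.
have -> : \sum_x Yf a x * (n%:R * (x == b)%:R - vv x * vv b) =
   \sum_x ((b == x)%:R * (n%:R * Yf a x) - (Yf a x * vv x) * vv b).
  by apply: eq_bigr => x _; rewrite eq_sym; ring.
rewrite !sumrB !sum_delta -mulr_sumr -mulr_suml L1 L2.
have := L3 a b; move: (Xf a b) (Yf a b) => x y H.
have -> : y = x - (vv a * ww b + ww a * vv b) by rewrite -H opprB addrC subrK.
ring.
Qed.

Lemma QQ : mat Qf *m mat Qf = ((n%:R ^+ 2 : int)%:M).
Proof.
rewrite !mat_mul; apply/matrixP => i j; rewrite !mxE.
set a := enum_val i; set b := enum_val j.
have -> : \sum_x Qf a x * Qf x b =
   \sum_x ((a == x)%:R * (n%:R * Qf x b) - vv a * (vv x * Qf x b)).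
  by apply: eq_bigr => x _; rewrite {1}/Qf; ring.
rewrite sumrB sum_delta -mulr_sumr L5 /Qf /a /b (inj_eq enum_val_inj).
case: (i == j) => /=; ring.
Qed.

Lemma cosp_main : cospectral Gp Gpp.
Proof.
have A : char_poly (adjacency Gp) = char_poly (adjacency Yr).
  apply: (@char_poly_sim _ _ _ (mat Qf)); first exact: QX.
  have := congr1 determinant QQ; rewrite det_mulmx det_scalar => H.
  apply/eqP => H0; move: H; rewrite H0 mul0r => /eqP; rewrite eq_sym.
  by rewrite !expf_eq0 pnatr_eq0 -(negbK (n == 0)%N) -lt0n n0 !andbF.
rewrite /cospectral A.
apply: (@cosp_iso _ _ _ _ sig) => //.
exists (fun y : (T2 + 'I_m) + T1 => match y with
   inl (inl a) => inr a | inl (inr p) => inl (inr p) | inr b => inl (inl b) end : UU).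
  by case=> [[]|].
by case=> [[]|].
Qed.
End Cosp.
End MX.
Import MX.

Lemma Z_small (T : finType) (e : rel T) : #|T| <= 1 -> zero_forcing_number e = #|T|.
Proof.
move=> H; apply/eqP; rewrite eqn_leq Z_leT /=.
case: #|T| H (@Z_gt0 T e) => [|[|]] //= _ h; exact: h.
Qed.

Lemma k_pos (T : finType) (e : rel T) k : connected_graph e -> k_regular e k ->
  1 < #|T| -> 0 < k.
Proof.
move=> co re H.
have [x _] : exists x : T, x \in T by apply/card_gt0P; apply: ltnW.
have [y] : exists y, y \in [set~ x] by apply/card_gt0P; rewrite cardsC1 -ltnS (ltn_predK H).
rewrite !inE => yx.
case/connectP: (co x y) => -[|z p] /=; first by move=> _ Hy; move: yx; rewrite Hy eqxx.
case/andP => exz _ _; rewrite -(re x); apply/card_gt0P; exists z; by rewrite inE.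
Qed.

Theorem theorem5p1 (T1 T2 : finType) (e1 : rel T1) (e2 : rel T2) (n k m : nat) :
  simple_graph e1 -> simple_graph e2 ->
  connected_graph e1 -> connected_graph e2 ->
  k_regular e1 k -> k_regular e2 k ->
  #|T1| = n -> #|T2| = n ->
  zero_forcing_number e1 <> zero_forcing_number e2 ->
  n <= m ->
  let G' := dunion_rel (join_rel e1 (@path_rel m)) e2 in
  let G'' := dunion_rel (join_rel e2 (@path_rel m)) e1 in
  [/\ ~ isomorphic G' G'', cospectral G' G'' &
      zero_forcing_number G' <> zero_forcing_number G''].
Proof.
move=> s1 s2 co1 co2 r1 r2 c1 c2 Zne nm G' G''.
have n2 : 1 < n.
  rewrite ltnNge; apply/negP => H; apply: Zne.
  by rewrite !Z_small ?c1 ?c2.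
have k1 : 0 < k by apply: (k_pos co1 r1); rewrite c1.
have m2 : 1 < m by apply: leq_trans nm.
have ZG' : zero_forcing_number G' = n.+1 + zero_forcing_number e2.
  by rewrite /G' Z_dunion (Z_join s1 r1 c1 k1 nm m2).
have ZG'' : zero_forcing_number G'' = n.+1 + zero_forcing_number e1.
  by rewrite /G'' Z_dunion (Z_join s2 r2 c2 k1 nm m2).
have ZZ : zero_forcing_number G' <> zero_forcing_number G''.
  by rewrite ZG' ZG'' => /eqP; rewrite eqn_add2l => /eqP /esym.
split => //.
  by move/Z_iso.
exact: (cosp_main m (proj1 s1) (proj1 s2) r1 r2 c1 c2 (ltnW n2)).
Qed.
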